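(* For all $a\in\mathbb F_{3^m}^*$ and $b\in\mathbb F_{3^{2m}}$, the vector $(\mathrm{Tr}_{2m}(at^{3^m+1})\,\mathrm{Tr}_{2m}(bt))_{t\in\mathbb F_{3^{2m}}}$ belongs to $\mathcal C_3(\mathbb D_d)$.
   Context: Let $m\ge 2$ be an integer. For $s\in\{m,2m\}$ let $\mathrm{Tr}_s:\mathbb F_{3^s}\to\mathbb F_3$ denote the absolute trace. Vectors in $\mathbb F_3^{3^{2m}}$ are indexed by $\mathbb F_{3^{2m}}$, and a function $f:\mathbb F_{3^{2m}}\to\mathbb F_3$ is identified with $(f(t))_{t\in\mathbb F_{3^{2m}}}$. Let $\mathcal C(2m,3)=\{(\mathrm{Tr}_{2m}(at^{3^m+1}+bt)+h)_{t\in\mathbb F_{3^{2m}}}: a\in\mathbb F_{3^m}, b\in\mathbb F_{3^{2m}}, h\in\mathbb F_3\}$, let $d$ be its minimum nonzero Hamming weight, let $\mathbb D_d$ be the incidence structure on $\mathbb F_{3^{2m}}$ whose blocks are the supports of the weight-$d$ codewords, and let $\mathcal C_3(\mathbb D_d)$ be the $\mathbb F_3$-span of the incidence vectors of the blocks (entry $1$ on the block, $0$ elsewhere). *)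

(* Defs.v *)
From HB Require Import structures.
From mathcomp Require Import all_boot all_order all_algebra all_field.
Set Implicit Arguments. Unset Strict Implicit. Unset Printing Implicit Defensive.
Import GRing.Theory.
Local Open Scope ring_scope.

Section Defs.
Variable F : finFieldType.  (* intended: F = F_{3^{2m}} *)
Variable m : nat.

Definition TrF (x : F) : F := \sum_(i < (2 * m)%N) x ^+ (3 ^ i).

(* The same trace, read as an element of F_3 = 'F_3 (via the prime field of F). *)
Definition Tr3 (x : F) : 'F_3 :=
  odflt 0 [pick k : 'F_3 | ((k : nat)%:R : F) == TrF x].

Definition inFm (a : F) : bool := a ^+ (3 ^ m) == a.

Definition codeC : {set {ffun F -> 'F_3}} :=
  [set c | [exists a : F, exists b : F, exists h : 'F_3,
     inFm a && (c == [ffun t => Tr3 (a * t ^+ (3 ^ m + 1) + b * t) + h])]].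

Definition wt (c : {ffun F -> 'F_3}) : nat := #|[set t | c t != 0]|.

Definition min_weight_word (c : {ffun F -> 'F_3}) : bool :=
  [&& c \in codeC, c != 0 &
      [forall c' in codeC, (c' != 0) ==> (wt c <= wt c')%N]].

Definition blocksD : {set {set F}} :=
  [set [set t | c t != 0] | c : {ffun F -> 'F_3} in [set c | min_weight_word c]].

Definition incvec (S : {set F}) : {ffun F -> 'F_3} := [ffun t => (t \in S)%:R].

Definition in_code_of_design (v : {ffun F -> 'F_3}) : Prop :=
  exists lam : {set F} -> 'F_3,
    forall t : F, v t = \sum_(S in blocksD) lam S * incvec S t.

End Defs.

(* Main.v *)
Require Import Defs.
From HB Require Import structures.
From mathcomp Require Import all_boot all_order all_algebra all_field.
From mathcomp Require Import ring zify.
Import GRing.Theory.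
Local Open Scope ring_scope.

Definition phi (F : finFieldType) (k : 'F_3) : F := ((k : nat)%:R : F).

Lemma F3_cases (k : 'F_3) : k = 0 \/ k = 1 \/ k = 2%:R.
Proof. by case: k => [[|[|[|//]]] ?]; [left|right;left|right;right]; apply: val_inj. Qed.

Lemma phiD {F : finFieldType} (h3 : (3 \in [pchar F])%N) (x y : 'F_3) :
  phi F (x + y) = phi F x + phi F y.
Proof.
rewrite /phi -natrD -(GRing.natr_mod_pchar h3 (x + y)%N).
by case: (F3_cases x) => [->|[->|->]]; case: (F3_cases y) => [->|[->|->]].
Qed.

Lemma phiM {F : finFieldType} (h3 : (3 \in [pchar F])%N) (x y : 'F_3) :
  phi F (x * y) = phi F x * phi F y.
Proof.
rewrite /phi -natrM -(GRing.natr_mod_pchar h3 (x * y)%N).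
by case: (F3_cases x) => [->|[->|->]]; case: (F3_cases y) => [->|[->|->]].
Qed.

Lemma phi_inj {F : finFieldType} (h3 : (3 \in [pchar F])%N) : injective (phi F).
Proof.
have h1 : (1%:R : F) != 0 by rewrite oner_eq0.
have h2 : (2%:R : F) != 0.
  by apply/negP; rewrite -(dvdn_pcharf h3).
have h21 : (2%:R : F) != 1.
  by rewrite -subr_eq0 -(natrB F (isT : (1 <= 2)%N)).
have v0 : nat_of_ord (0 : 'F_3) = 0%N by [].
have v1 : nat_of_ord (1 : 'F_3) = 1%N by [].
have v2 : nat_of_ord (2%:R : 'F_3) = 2%N by [].
move=> x y; rewrite /phi.
case: (F3_cases x) => [->|[->|->]]; case: (F3_cases y) => [->|[->|->]];
 rewrite ?v0 ?v1 ?v2 // => E; exfalso; move/eqP: E; apply/negP;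
 rewrite ?mulr0n ?mulr1n ?(eq_sym 0) ?(eq_sym 1 (2%:R)) //.
Qed.


Lemma pnat3 {F : finFieldType} (h3 : (3 \in [pchar F])%N) n : ([pchar F]).-nat (3 ^ n)%N.
Proof. by rewrite (eq_pnat _ (pcharf_eq h3)) pnatX pnat_id. Qed.

Lemma frobD {F : finFieldType} (h3 : (3 \in [pchar F])%N) n (x y : F) :
  (x + y) ^+ (3 ^ n) = x ^+ (3 ^ n) + y ^+ (3 ^ n).
Proof. by rewrite exprDn_pchar // pnat3. Qed.

Lemma frobN {F : finFieldType} (h3 : (3 \in [pchar F])%N) n (x : F) :
  (- x) ^+ (3 ^ n) = - x ^+ (3 ^ n).
Proof. by rewrite exprNn_pchar // pnat3. Qed.

Lemma TrFD {F : finFieldType} (h3 : (3 \in [pchar F])%N) m (x y : F) :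
  TrF m (x + y) = TrF m x + TrF m y.
Proof. by rewrite /TrF -big_split; apply: eq_bigr => i _; rewrite frobD. Qed.

Lemma TrFN {F : finFieldType} (h3 : (3 \in [pchar F])%N) m (x : F) :
  TrF m (- x) = - TrF m x.
Proof. by rewrite /TrF -sumrN; apply: eq_bigr => i _; rewrite frobN. Qed.

Lemma TrF0 {F : finFieldType} m : TrF m (0 : F) = 0.
Proof. by rewrite /TrF big1 // => i _; rewrite expr0n expn_eq0. Qed.

Lemma cardFX {F : finFieldType} m (hF : #|F| = (3 ^ (2 * m))%N) (x : F) :
  x ^+ (3 ^ (2 * m)) = x.
Proof. by rewrite -hF expf_card. Qed.

Lemma TrF3 {F : finFieldType} m (hF : #|F| = (3 ^ (2 * m))%N) (x : F) :
  TrF m (x ^+ 3) = TrF m x.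
Proof.
rewrite /TrF.
have -> : \sum_(i < 2 * m) (x ^+ 3) ^+ (3 ^ i) = \sum_(i < 2 * m) x ^+ (3 ^ i.+1).
  by apply: eq_bigr => i _; rewrite -exprM expnS.
case: (posnP m) => [->|mp]; first by rewrite !big_ord0.
have -> : (2 * m = (2 * m).-1.+1)%N by rewrite prednK // muln_gt0.
rewrite big_ord_recr big_ord_recl /= prednK ?muln_gt0 // cardFX // addrC.
congr (_ + _); apply: eq_bigr => i _ //.
Qed.

Lemma TrF3n {F : finFieldType} m (hF : #|F| = (3 ^ (2 * m))%N) n (x : F) :
  TrF m (x ^+ (3 ^ n)) = TrF m x.
Proof.
elim: n => [|n IH]; first by rewrite expr1.
by rewrite expnSr exprM TrF3.
Qed.

Lemma TrF_cube {F : finFieldType} (h3 : (3 \in [pchar F])%N) m (hF : #|F| = (3 ^ (2 * m))%N) (x : F) :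
  (TrF m x) ^+ 3 = TrF m x.
Proof.
have h := big_morph (fun z : F => z ^+ (3 ^ 1)) (fun a b => @frobD F h3 1 a b) (expr0n _ _).
rewrite -[in RHS](TrF3 _ hF) /TrF h /=.
by apply: eq_bigr => i _; rewrite expn1 exprAC.
Qed.

Lemma phi2 {F : finFieldType} (h3 : (3 \in [pchar F])%N) : phi F (2%:R) = -1.
Proof.
rewrite /phi (_ : nat_of_ord (2%:R : 'F_3) = 2%N) //.
by apply/eqP; rewrite -subr_eq0 opprK -(natrD F 2 1) (pcharf0 h3).
Qed.

Lemma Tr3_spec {F : finFieldType} (h3 : (3 \in [pchar F])%N) {m : nat}
  (hF : #|F| = (3 ^ (2 * m))%N) (x : F) : phi F (Tr3 m x) = TrF m x.
Proof.
set y := TrF m x.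
have hy : y * (y - 1) * (y + 1) = 0.
  have -> : y * (y - 1) * (y + 1) = y ^+ 3 - y by ring.
  by rewrite TrF_cube // subrr.
have [k hk] : exists k : 'F_3, phi F k = y.
  move/eqP: hy; rewrite !mulf_eq0 subr_eq0 addr_eq0 => /orP[/orP[/eqP->|/eqP->]|/eqP->].
  - by exists 0; rewrite /phi.
  - by exists 1; rewrite /phi.
  - by exists 2%:R; rewrite phi2.
rewrite /Tr3; case: pickP => [k' /eqP //|/(_ k)]; rewrite -/(phi F k) hk eqxx //.
Qed.

Lemma Tr3_eq {F : finFieldType} (h3 : (3 \in [pchar F])%N) {m : nat}
  (hF : #|F| = (3 ^ (2 * m))%N) (x : F) (c : 'F_3) :
  (Tr3 m x == c) = (TrF m x == phi F c).
Proof.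
rewrite -(Tr3_spec h3 hF); apply/eqP/eqP => [->//|]; exact: phi_inj.
Qed.

Lemma Tr3D {F : finFieldType} (h3 : (3 \in [pchar F])%N) {m : nat}
  (hF : #|F| = (3 ^ (2 * m))%N) (x y : F) : Tr3 m (x + y) = Tr3 m x + Tr3 m y.
Proof. by apply: (phi_inj h3); rewrite phiD // !(Tr3_spec h3 hF) TrFD. Qed.

Lemma Tr30 {F : finFieldType} (h3 : (3 \in [pchar F])%N) {m : nat}
  (hF : #|F| = (3 ^ (2 * m))%N) : Tr3 m (0 : F) = 0.
Proof. by apply: (phi_inj h3); rewrite (Tr3_spec h3 hF) TrF0 /phi. Qed.

Lemma Tr3N {F : finFieldType} (h3 : (3 \in [pchar F])%N) {m : nat}
  (hF : #|F| = (3 ^ (2 * m))%N) (x : F) : Tr3 m (- x) = - Tr3 m x.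
Proof.
apply/eqP; rewrite -addr_eq0 -Tr3D // addrC subrr Tr30 //.
Qed.


Lemma cardqq {F : finFieldType} {m : nat} (hF : #|F| = (3 ^ (2 * m))%N) (x : F) :
  (x ^+ (3 ^ m)) ^+ (3 ^ m) = x.
Proof. by rewrite -exprM -expnD addnn -mul2n cardFX. Qed.

Lemma shift_gen {F : finFieldType} (h3 : (3 \in [pchar F])%N) {m : nat}
  (hF : #|F| = (3 ^ (2 * m))%N) (a s t : F) (ha : a ^+ (3 ^ m) = a) :
  TrF m (a * (t + s) ^+ (3 ^ m + 1)) =
  TrF m (a * t ^+ (3 ^ m + 1) + (a + a) * s ^+ (3 ^ m) * t) + TrF m (a * s ^+ (3 ^ m + 1)).
Proof.
have E : TrF m (a * t ^+ (3 ^ m) * s) = TrF m (a * s ^+ (3 ^ m) * t).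
  rewrite -(TrF3n _ hF m (a * t ^+ (3 ^ m) * s)) !exprMn ha cardqq //.
  by congr (TrF m _); ring.
rewrite exprD expr1 frobD // !TrFD //.
have -> : a * ((t ^+ (3 ^ m) + s ^+ (3 ^ m)) * (t + s)) =
   a * (t ^+ (3 ^ m) * t) + a * t ^+ (3 ^ m) * s + a * s ^+ (3 ^ m) * t
   + a * (s ^+ (3 ^ m) * s) by ring.
rewrite !TrFD // E !exprD !expr1 -!mulrA mulrDl TrFD // !mulrA.
by rewrite -!addrA.
Qed.


Lemma root_bound {F : finFieldType} n (w k : F) : (0 < n)%N -> w != 0 ->
  (#|[set t : F | (\sum_(i < n) (w * t) ^+ (3 ^ i) == k)%R]| <= 3 ^ n.-1)%N.
Proof.
move=> n0 w0.
pose p : {poly F} := \sum_(i < n) (w ^+ (3 ^ i)) *: 'X^(3 ^ i) - k%:P.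
have hp t : p.[t] = \sum_(i < n) (w * t) ^+ (3 ^ i) - k.
  rewrite /p hornerD hornerN hornerC horner_sum; congr (_ - _).
  by apply: eq_bigr => i _; rewrite hornerZ hornerXn exprMn.
have sz : (size p <= (3 ^ n.-1).+1)%N.
  rewrite /p (leq_trans (size_add _ _)) // geq_max size_opp size_polyC.
  rewrite (leq_trans (leq_b1 _)) ?ltnS ?expn_gt0 // andbT.
  apply: (leq_trans (size_sum _ _ _)); apply/bigmax_leqP => i _.
  rewrite (leq_trans (size_scale_leq _ _)) // size_polyXn ltnS leq_exp2l //.
  by rewrite -ltnS prednK.
have c : p`_(3 ^ n.-1) = w ^+ (3 ^ n.-1).
  rewrite /p coefB coefC expn_eq0 /= subr0 coef_sum.
  have ni : (n.-1 < n)%N by rewrite prednK.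
  rewrite (bigD1 (Ordinal ni)) //= coefZ coefXn eqxx mulr1.
  rewrite big1 ?addr0 // => i ne; rewrite coefZ coefXn eqn_exp2l //.
  by rewrite (negbTE (_ : (n.-1 != i)%N)) ?mulr0 // eq_sym; apply: contra ne => /eqP e; apply/eqP/val_inj.
have pn0 : p != 0.
  by apply/eqP => e; move: c; rewrite e coef0 => /esym/eqP; rewrite expf_eq0 (negbTE w0) andbF.
rewrite cardE -ltnS (leq_trans _ sz) //; apply: max_poly_roots => //.
  by apply/allP => t; rewrite mem_enum inE /root hp subr_eq0.
exact: enum_uniq.
Qed.

Lemma fib_bound {F : finFieldType} n (u : F) :
  (#|[set t : F | (t ^+ n.+1 == u)%R]| <= n.+1)%N.
Proof.
pose p : {poly F} := 'X^(n.+1) - u%:P.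
have sz : size p = n.+2 by rewrite size_XnsubC.
have pn0 : p != 0 by rewrite -size_poly_eq0 sz.
rewrite cardE -ltnS -sz; apply: max_poly_roots => //; last exact: enum_uniq.
by apply/allP => t; rewrite mem_enum inE /root !hornerE subr_eq0.
Qed.

Lemma fib0 {F : finFieldType} n : (#|[set t : F | (t ^+ n.+1 == 0)%R]| <= 1)%N.
Proof.
rewrite (_ : [set t : F | _] = [set 0]) ?cards1 //.
by apply/setP => t; rewrite !inE expf_eq0.
Qed.

Lemma TrF_split {F : finFieldType} m (x : F) : x ^+ (3 ^ m) = x ->
  TrF m x = \sum_(i < m) x ^+ (3 ^ i) + \sum_(i < m) x ^+ (3 ^ i).
Proof.
move=> hx; rewrite /TrF mul2n -addnn big_split_ord /=; congr (_ + _).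
by apply: eq_bigr => i _; rewrite expnD exprM hx.
Qed.

Lemma K_bound {F : finFieldType} (h3 : (3 \in [pchar F])%N) {m : nat}
  (hF : #|F| = (3 ^ (2 * m))%N) (m0 : (0 < m)%N) (a : F) (ha : a ^+ (3 ^ m) = a)
  (a0 : a != 0) (c : 'F_3) :
  (#|[set u : F | ((u ^+ (3 ^ m) == u) && (Tr3 m (a * u) == c))%R]| <= 3 ^ m.-1)%N.
Proof.
apply: (leq_trans _ (@root_bound F m a (- phi F c) m0 a0)).
apply/subset_leq_card/subsetP => u; rewrite !inE => /andP[/eqP hu].
rewrite (Tr3_eq h3 hF) TrF_split; last by rewrite exprMn ha hu.
set T := \sum_(i < m) _ => /eqP <-.
have : T *+ 3 = 0 by rewrite (mulrn_pchar h3).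
by rewrite !mulrS mulr0n addr0 => /eqP; rewrite addrA addr_eq0 => /eqP ->; rewrite opprK.
Qed.

Lemma count_bound {F : finFieldType} (h3 : (3 \in [pchar F])%N) {m : nat}
  (hF : #|F| = (3 ^ (2 * m))%N) (m0 : (0 < m)%N) (a : F) (ha : a ^+ (3 ^ m) = a)
  (a0 : a != 0) (c : 'F_3) :
  (#|[set t : F | (Tr3 m (a * t ^+ (3 ^ m + 1)) == c)%R]| <=
    (if (c == 0)%R then 1 + (3 ^ m.-1 - 1) * (3 ^ m).+1 else 3 ^ m.-1 * (3 ^ m).+1))%N.
Proof.
set A := [set t : F | _].
set K := [set u : F | ((u ^+ (3 ^ m) == u) && (Tr3 m (a * u) == c))%R].
have hK := K_bound h3 hF m0 a ha a0 c; rewrite -/K in hK.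
have step : #|A| = (\sum_(u in K) #|[set t in A | (t ^+ (3 ^ m + 1) == u)%R]|)%N.
  rewrite -sum1_card (partition_big (fun t => t ^+ (3 ^ m + 1)) (mem K)).
    by apply: eq_bigr => u _; rewrite -sum1_card; apply: eq_bigl => t; rewrite inE.
  move=> t; rewrite !inE => ->; rewrite andbT -exprM mulnC exprM.
  by rewrite !exprD !expr1 cardqq // mulrC.
have fb u : (#|[set t in A | (t ^+ (3 ^ m + 1) == u)%R]| <= (if (u == 0)%R then 1 else (3 ^ m).+1))%N.
  apply: (@leq_trans #|[set t : F | (t ^+ (3 ^ m).+1 == u)%R]|).
    by apply/subset_leq_card/subsetP => t; rewrite !inE addn1 => /andP[].
  by case: eqP => [->|_]; [exact: fib0 | exact: fib_bound].
rewrite step; case: eqP => [c0|/eqP c0].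
  have K0 : (0 : F) \in K by rewrite inE expr0n expn_eq0 eqxx /= mulr0 Tr30 // c0.
  rewrite (bigD1 0) //=.
  apply: leq_add; first by move: (fb 0); rewrite eqxx.
  apply: (@leq_trans (\sum_(i in K :\ 0%R) (3 ^ m).+1)%N).
    rewrite [X in (_ <= X)%N](eq_bigl (fun i => (i \in K) && (i != 0))); last first.
      by move=> i; rewrite !inE andbC.
    by apply: leq_sum => i /andP[_ /negbTE]; move: (fb i) => /[swap] ->.
  rewrite sum_nat_const leq_mul2r; apply/orP; right.
  move: hK; rewrite (cardsD1 0 K) K0 add1n => h; rewrite leq_subRL ?addn1 //; exact: leq_ltn_trans h.
apply: (@leq_trans (\sum_(i in K) (3 ^ m).+1)%N).
  apply: leq_sum => i _; move: (fb i); case: eqP => // _ h; exact: (leq_trans h).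
by rewrite sum_nat_const leq_mul2r hK orbT.
Qed.


Lemma sumF3 (g : 'F_3 -> nat) : (\sum_(c : 'F_3) g c)%N = (g 0%R + g 1%R + g 2%:R)%N.
Proof.
rewrite big_ord_recl big_ord_recl big_ord_recl big_ord0 addn0 addnA.
congr (_ + _ + _); congr g; exact: val_inj.
Qed.

Lemma total3 {F : finFieldType} (f : F -> 'F_3) :
  (#|[set t | f t == 0%R]| + #|[set t | f t == 1%R]| + #|[set t | f t == 2%:R]|)%N = #|F|.
Proof.
rewrite -(sumF3 (fun c => #|[set t | f t == c]|)) -sum1_card (partition_big f predT) //.
by apply: eq_bigr => c _; rewrite -sum1_card; apply: eq_bigl => t; rewrite inE.
Qed.

Lemma arith3 (r N0 N1 N2 : nat) : (0 < r)%N -> (N0 + N1 + N2 = (3 * r) * (3 * r))%N ->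
  (N0 <= 1 + (r - 1) * (3 * r).+1)%N -> (N1 <= r * (3 * r).+1)%N -> (N2 <= r * (3 * r).+1)%N ->
  N1 = (r * (3 * r).+1)%N /\ N2 = (r * (3 * r).+1)%N.
Proof. move=> *; split; nia. Qed.

Lemma count_exact {F : finFieldType} (h3 : (3 \in [pchar F])%N) {m : nat}
  (hF : #|F| = (3 ^ (2 * m))%N) (m0 : (0 < m)%N) (a : F) (ha : a ^+ (3 ^ m) = a)
  (a0 : a != 0) (e : 'F_3) : e != 0 ->
  #|[set t : F | (Tr3 m (a * t ^+ (3 ^ m + 1)) == e)%R]| = (3 ^ m.-1 * (3 ^ m).+1)%N.
Proof.
move=> e0.
have b := count_bound h3 hF m0 a ha a0.
have q3 : (3 ^ m = 3 * 3 ^ m.-1)%N by rewrite -expnS prednK.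
have hT := total3 (fun t => Tr3 m (a * t ^+ (3 ^ m + 1))).
have sq : #|F| = (3 * 3 ^ m.-1 * (3 * 3 ^ m.-1))%N.
  by rewrite hF mulnC expnM -q3 expnS expn1.
rewrite sq in hT.
have b0 := b 0; have b1 := b 1; have b2 := b 2%:R; rewrite /= in b0 b1 b2.
rewrite [in X in (_ <= X)%N]q3 in b0; rewrite [in X in (_ <= X)%N]q3 in b1;
rewrite [in X in (_ <= X)%N]q3 in b2.
have r0 : (0 < 3 ^ m.-1)%N by rewrite expn_gt0.
have [] := arith3 _ _ _ _ r0 hT b0 b1 b2; rewrite -q3 => E1 E2.
by case: (F3_cases e) e0 => [->|[->|->]]; rewrite ?eqxx.
Qed.


Lemma shift3 {F : finFieldType} (h3 : (3 \in [pchar F])%N) {m : nat}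
  (hF : #|F| = (3 ^ (2 * m))%N) (a s t : F) (ha : a ^+ (3 ^ m) = a) :
  Tr3 m (a * (t + s) ^+ (3 ^ m + 1)) =
  Tr3 m (a * t ^+ (3 ^ m + 1) + (a + a) * s ^+ (3 ^ m) * t) + Tr3 m (a * s ^+ (3 ^ m + 1)).
Proof.
by apply: (phi_inj h3); rewrite phiD // !(Tr3_spec h3 hF) shift_gen.
Qed.

Lemma card_shift {F : finFieldType} (P : pred F) (s : F) :
  #|[set t | P (t + s)]| = #|[set t | P t]|.
Proof.
rewrite -(card_imset _ (addIr (- s))); apply: eq_card => u; rewrite inE.
apply/idP/imsetP => [Pu|[t]]; first by exists (u + s); rewrite ?inE ?addrK.
by rewrite inE => Pt ->; rewrite subrK.
Qed.

Lemma wt_zeros {F : finFieldType} (c : {ffun F -> 'F_3}) :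
  (wt c + #|[set t | (c t == 0)%R]|)%N = #|F|.
Proof.
rewrite /wt -(cardsC [set t | c t != 0]); congr (_ + _).
suff -> : [set t | c t == 0] = ~: [set t | c t != 0] by [].
by apply/setP => t; rewrite !inE negbK.
Qed.

Lemma twoN {F : finFieldType} (h3 : (3 \in [pchar F])%N) (a : F) : a + a = - a.
Proof.
apply/eqP; rewrite -addr_eq0 -(mulrn_pchar h3 a).
by rewrite !mulrS mulr0n addr0 addrA.
Qed.

Lemma zeros_bound {F : finFieldType} (h3 : (3 \in [pchar F])%N) {m : nat}
  (hF : #|F| = (3 ^ (2 * m))%N) (m0 : (0 < m)%N) (c : {ffun F -> 'F_3}) :
  c \in codeC F m -> c != 0 ->
  (#|[set t | (c t == 0)%R]| <= 3 ^ m.-1 * (3 ^ m).+1)%N.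
Proof.
rewrite inE => /existsP[a /existsP[b /existsP[h /andP[/eqP ha /eqP ->]]]] nz.
case: (eqVneq a 0) => [a0|a0].
  subst a.
  case: (eqVneq b 0) => [b0|b0].
    subst b.
    have h0 : h != 0.
      apply: contraNneq nz => h0; apply/eqP/ffunP => t.
      by rewrite !ffunE !mul0r addr0 Tr30 // h0 add0r.
    rewrite (_ : [set t | _] = set0) ?cards0 //.
    by apply/setP => t; rewrite !inE ffunE !mul0r addr0 Tr30 // add0r (negbTE h0).
  apply: (leq_trans (n := 3 ^ (2 * m).-1)).
    apply: (leq_trans _ (@root_bound F (2 * m) b (phi F (- h)) _ b0)); last by rewrite muln_gt0.
    apply/subset_leq_card/subsetP => t; rewrite !inE ffunE mul0r add0r addr_eq0.
    by rewrite (Tr3_eq h3 hF).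
  rewrite (_ : (2 * m).-1 = m.-1 + m)%N; last by lia.
  by rewrite expnD leq_mul2l ltnW ?orbT.
have aa0 : a + a != 0 by rewrite twoN // oppr_eq0.
pose s := (b / (a + a)) ^+ (3 ^ m).
have hs : (a + a) * s ^+ (3 ^ m) = b by rewrite /s cardqq // mulrC divfK.
set k := h - Tr3 m (a * s ^+ (3 ^ m + 1)).
rewrite (_ : [set t | _] = [set t | Tr3 m (a * (t + s) ^+ (3 ^ m + 1)) + k == 0]); last first.
  apply/setP => t; rewrite !inE ffunE shift3 // hs [b * t]mulrC /k.
  by rewrite (addrC h) addrA addrK.
rewrite (card_shift (fun t => Tr3 m (a * t ^+ (3 ^ m + 1)) + k == 0)).
rewrite (_ : [set t | _] = [set t | Tr3 m (a * t ^+ (3 ^ m + 1)) == - k]); last first.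
  by apply/setP => t; rewrite !inE addr_eq0.
apply: (leq_trans (count_bound h3 hF m0 a ha a0 (- k))).
case: eqP => // _.
have : (0 < 3 ^ m.-1)%N by rewrite expn_gt0.
move: (3 ^ m.-1)%N (3 ^ m)%N => r q r0; nia.
Qed.

Lemma X_min {F : finFieldType} (h3 : (3 \in [pchar F])%N) {m : nat}
  (hF : #|F| = (3 ^ (2 * m))%N) (m0 : (0 < m)%N) (a : F) (ha : a ^+ (3 ^ m) = a)
  (a0 : a != 0) (s : F) (e : 'F_3) (e0 : e != 0) :
  min_weight_word m [ffun t => Tr3 m (a * (t + s) ^+ (3 ^ m + 1)) + e].
Proof.
set X := [ffun t => _].
have zX : #|[set t | (X t == 0)%R]| = (3 ^ m.-1 * (3 ^ m).+1)%N.
  rewrite (_ : [set t | _] = [set t | Tr3 m (a * (t + s) ^+ (3 ^ m + 1)) + e == 0]); last first.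
    by apply/setP => t; rewrite !inE ffunE.
  rewrite (card_shift (fun t => Tr3 m (a * t ^+ (3 ^ m + 1)) + e == 0)).
  rewrite (_ : [set t | _] = [set t | Tr3 m (a * t ^+ (3 ^ m + 1)) == - e]); last first.
    by apply/setP => t; rewrite !inE addr_eq0.
  by apply: count_exact => //; rewrite oppr_eq0.
have inC : X \in codeC F m.
  rewrite inE; apply/existsP; exists a; apply/existsP; exists ((a + a) * s ^+ (3 ^ m)).
  apply/existsP; exists (Tr3 m (a * s ^+ (3 ^ m + 1)) + e).
  rewrite /inFm ha eqxx /=; apply/eqP/ffunP => t; rewrite !ffunE shift3 //.
  by rewrite !addrA -(mulrA _ _ t).
have q3 : (3 ^ m = 3 * 3 ^ m.-1)%N by rewrite -expnS prednK.
have sq : #|F| = (3 * 3 ^ m.-1 * (3 * 3 ^ m.-1))%N.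
  by rewrite hF mulnC expnM -q3 expnS expn1.
have r0 : (0 < 3 ^ m.-1)%N by rewrite expn_gt0.
have Xn0 : X != 0.
  apply/eqP => X0; move: zX; rewrite X0.
  rewrite (_ : [set t | _] = setT); last by apply/setP => t; rewrite !inE ffunE.
  rewrite cardsT sq q3; move: r0; move: (3 ^ m.-1)%N => r r0; nia.
rewrite /min_weight_word inC Xn0 /=; apply/forall_inP => c' inc'; apply/implyP => nz.
have := zeros_bound h3 hF m0 c' inc' nz; have := wt_zeros (F:=F) X; have := wt_zeros c'.
rewrite zX; lia.
Qed.


Lemma sqF3 (x : 'F_3) : x ^+ 2 = (x != 0)%:R.
Proof. by case: (F3_cases x) => [->|[->|->]]; apply: val_inj. Qed.

Lemma in_code_ext {F : finFieldType} m (v w : {ffun F -> 'F_3}) :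
  (forall t, v t = w t) -> in_code_of_design m w -> in_code_of_design m v.
Proof. by move=> e [lam hl]; exists lam => t; rewrite e hl. Qed.

Lemma in_code_add {F : finFieldType} m (v w : {ffun F -> 'F_3}) :
  in_code_of_design m v -> in_code_of_design m w ->
  in_code_of_design m [ffun t => v t + w t].
Proof.
move=> [l1 h1] [l2 h2]; exists (fun S => l1 S + l2 S) => t.
by rewrite ffunE h1 h2 -big_split; apply: eq_bigr => S _; rewrite mulrDl.
Qed.

Lemma in_code_single {F : finFieldType} m (c : {ffun F -> 'F_3}) (k : 'F_3) :
  min_weight_word m c -> in_code_of_design m [ffun t => k * (c t) ^+ 2].
Proof.
move=> mw; set S0 := [set t | c t != 0].
have inB : S0 \in blocksD F m by apply/imsetP; exists c; rewrite ?inE.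
exists (fun S => if S == S0 then k else 0) => t.
rewrite (bigD1 S0) //= eqxx big1 ?addr0; last first.
  by move=> S /andP[_ /negbTE ->]; rewrite mul0r.
by rewrite ffunE /incvec ffunE inE sqF3.
Qed.

Arguments in_code_add {F m v w}.
Arguments in_code_single {F m c}.
Arguments in_code_ext {F m v w}.

Lemma F3_ident (x l k : 'F_3) :
  x * l = (k - 1) * (x + l + k + 1) ^+ 2 + (- 1 - k) * (x + l + k + - 1) ^+ 2
        + ((1 - k) * (x - l + k + 1) ^+ 2 + (1 + k) * (x - l + k + - 1) ^+ 2).
Proof.
by case: (F3_cases x) => [->|[->|->]]; case: (F3_cases l) => [->|[->|->]];
   case: (F3_cases k) => [->|[->|->]]; apply: val_inj.
Qed.

Theorem lemma3p9 (m : nat) (F : finFieldType) :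
  (2 <= m)%N -> (3 \in [pchar F])%N -> #|F| = (3 ^ (2 * m))%N ->
  forall a b : F, inFm m a -> a != 0 ->
    in_code_of_design m
      [ffun t => Tr3 m (a * t ^+ (3 ^ m + 1)) * Tr3 m (b * t)].
Proof.
move=> m2 h3 hF a b /eqP ha a0.
have m0 : (0 < m)%N by lia.
have aa0 : a + a != 0 by rewrite twoN // oppr_eq0.
pose s := (b / (a + a)) ^+ (3 ^ m).
have hs : (a + a) * s ^+ (3 ^ m) = b by rewrite /s cardqq // mulrC divfK.
set k := Tr3 m (a * s ^+ (3 ^ m + 1)).
have hu t : Tr3 m (a * (t + s) ^+ (3 ^ m + 1)) =
    Tr3 m (a * t ^+ (3 ^ m + 1)) + Tr3 m (b * t) + k.
  by rewrite shift3 // hs Tr3D.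
have hw t : Tr3 m (a * (t + - s) ^+ (3 ^ m + 1)) =
    Tr3 m (a * t ^+ (3 ^ m + 1)) - Tr3 m (b * t) + k.
  rewrite shift3 // frobN // mulrN mulNr hs Tr3D // Tr3N //.
  by rewrite [(- s) ^+ _]exprD expr1 frobN // mulrNN -{2}(expr1 s) -exprD.
have e1 : (1 : 'F_3) != 0 by [].
have e2 : (- 1 : 'F_3) != 0 by [].
have M1 := X_min h3 hF m0 a ha a0 s 1 e1.
have M2 := X_min h3 hF m0 a ha a0 s (-1) e2.
have M3 := X_min h3 hF m0 a ha a0 (- s) 1 e1.
have M4 := X_min h3 hF m0 a ha a0 (- s) (-1) e2.
have C := in_code_add (in_code_add (in_code_single (k - 1) M1) (in_code_single (- 1 - k) M2))
                      (in_code_add (in_code_single (1 - k) M3) (in_code_single (1 + k) M4)).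
apply: (in_code_ext _ C).
move=> t; rewrite !ffunE hu hw; exact: F3_ident.
Qed.
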